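(* Fix $d \in \mathbb{N}$, $0<\eta \le \tfrac12$ and $j \in \mathbb{N}$. Let $\mathcal{C} \subset \mathcal{D}_j$ and let $\mathcal{C} = \mathcal{C}_1 \cup \dots \cup \mathcal{C}_d$ be a fixed $(\eta,d)$-homogeneous colouring of $\mathcal{C}$. Let $\mathcal{U} \subset \mathcal{D}_j$ with $\mathcal{U} \cap \mathcal{C} = \emptyset$ be such that the pair $(\mathcal{C},\mathcal{U})$ is $d$-previsible. Then there is a colouring $\mathcal{U} = \mathcal{U}_1 \cup \dots \cup \mathcal{U}_d$ of $\mathcal{U}$ such that $\{\mathcal{H}_i = \mathcal{C}_i \cup \mathcal{U}_i : 1 \le i \le d\}$ is an $(\eta,d)$-homogeneous colouring of $\mathcal{H} = \mathcal{C} \cup \mathcal{U}$.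
   Context: $\mathcal{D}$ denotes the collection of dyadic subintervals of $[0,1]$ and $\mathcal{D}_j = \{I \in \mathcal{D} : |I| = 2^{-j}\}$. For a collection $\mathcal{A}$ of dyadic intervals and $L \in \mathcal{D}$, write $\mathcal{A} \cap L = \{I \in \mathcal{A} : I \subset L\}$, and $|\mathcal{A}|$ for the cardinality of $\mathcal{A}$. A colouring of a collection $\mathcal{A}$ with $d$ colours is a decomposition $\mathcal{A} = \mathcal{A}_1 \cup \dots \cup \mathcal{A}_d$ into pairwise disjoint (possibly empty) subcollections ($\mathcal{A}_i$ = intervals of colour $i$). For $\mathcal{A} \subset \mathcal{D}_j$, $d \in \mathbb{N}$, $0<\eta\le \tfrac12$, such a decomposition is called an $(\eta,d)$-homogeneous colouring if for every $L \in \mathcal{D}$ with $|L| \ge 2^{-j}$ one of the following holds: either $|\mathcal{A} \cap L| > d$ and $\eta \max_{1\le i\le d} |\mathcal{A}_i \cap L| \le \min_{1 \le i \le d} |\mathcal{A}_i \cap L|$; or $|\mathcal{A} \cap L| \le d$ and $|\mathcal{A}_i \cap L| \le 1$ for each $1 \le i \le d$. For disjoint $\mathcal{C}, \mathcal{U} \subset \mathcal{D}_j$ and $d \in \mathbb{N}$, the pair $(\mathcal{C},\mathcal{U})$ is called $d$-previsible if for every $L \in \mathcal{D}$ with $|L| \ge 2^{-(j-1)}$ and its two dyadic children $L', L''$ (i.e. $L', L'' \in \mathcal{D}$, $L = L' \cup L''$, $|L'| = |L''| = |L|/2$, in either order), the conditions $|(\mathcal{U}\cup\mathcal{C}) \cap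 L'| < d$ and $|(\mathcal{U}\cup\mathcal{C}) \cap L''| \ge d$ imply $\mathcal{U} \cap L'' = \emptyset$ or $\mathcal{C} \cap L'' = \emptyset$. *)

(* Defs.v *)
From mathcomp Require Import all_boot all_order all_algebra.
Set Implicit Arguments. Unset Strict Implicit. Unset Printing Implicit Defensive.
Import Order.TTheory GRing.Theory Num.Theory.
Local Open Scope nat_scope.

(* Dyadic intervals of [0,1]: the interval of level k with index m (m < 2^k)
   is [m 2^-k, (m+1) 2^-k].  A collection A ⊂ D_j is a set of indices
   in 'I_(2^j).  For L of level k <= j and index m, an interval I in D_j
   with index i satisfies I ⊂ L  iff  i %/ 2^(j-k) = m. *)

Definition dyrestr (j : nat) (A : {set 'I_(2^j)}) (k m : nat) : {set 'I_(2^j)} :=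
  [set I in A | (nat_of_ord I) %/ 2 ^ (j - k) == m].

Definition colouring (j d : nat) (A : {set 'I_(2^j)})
    (Acol : 'I_d -> {set 'I_(2^j)}) : Prop :=
  (forall i i' : 'I_d, i != i' -> Acol i :&: Acol i' = set0) /\
  \bigcup_(i < d) Acol i = A.

Definition maxcount (j d : nat) (Acol : 'I_d -> {set 'I_(2^j)}) (k m : nat) : nat :=
  \max_(i < d) #|dyrestr (Acol i) k m|.

(* minimum over i < d (for d >= 1 the default value 2^j, an upper bound of
   every cardinality involved, is irrelevant) *)
Definition mincount (j d : nat) (Acol : 'I_d -> {set 'I_(2^j)}) (k m : nat) : nat :=
  \big[minn/2 ^ j]_(i < d) #|dyrestr (Acol i) k m|.

Definition homogeneous_colouring (R : realFieldType) (j d : nat) (eta : R)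
    (A : {set 'I_(2^j)}) (Acol : 'I_d -> {set 'I_(2^j)}) : Prop :=
  colouring A Acol /\
  forall k m : nat, k <= j -> m < 2 ^ k ->
    (d < #|dyrestr A k m| /\
       (eta * (maxcount Acol k m)%:R <= (mincount Acol k m)%:R)%R)
    \/ (#|dyrestr A k m| <= d /\ forall i : 'I_d, #|dyrestr (Acol i) k m| <= 1).

Definition previsible (j d : nat) (C U : {set 'I_(2^j)}) : Prop :=
  forall k m : nat, k < j -> m < 2 ^ k ->
    forall m' m'' : nat,
      (m' = m.*2 /\ m'' = m.*2.+1) \/ (m' = m.*2.+1 /\ m'' = m.*2) ->
      #|dyrestr (U :|: C) k.+1 m'| < d ->
      d <= #|dyrestr (U :|: C) k.+1 m''| ->
      dyrestr U k.+1 m'' = set0 \/ dyrestr C k.+1 m'' = set0.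

(* Main.v *)
Require Import Defs.
From mathcomp Require Import all_boot all_order all_algebra.
From mathcomp Require Import fingroup perm.
From mathcomp Require Import zify ring lra.
Import Order.TTheory GRing.Theory Num.Theory.
Set Implicit Arguments. Unset Strict Implicit.

Lemma half_eq (y m : nat) : (y %/ 2 == m) = (y == m.*2) || (y == m.*2.+1).
Proof. apply/idP/idP. move/eqP => <-. rewrite -!muln2. apply/orP; lia.
 move/orP; case => /eqP ->; rewrite -muln2 ?mulnK //. apply/eqP; lia. Qed.

Lemma sum_part (T : finType) (n : nat) (X : {set T}) (g : T -> 'I_n) :
  \sum_(i < n) #|[set x in X | g x == i]| = #|X|.
Proof.
rewrite -sum1_card (partition_big g xpredT) //=.
apply: eq_bigr => i _; rewrite -sum1_card; apply: eq_bigl => x; by rewrite inE.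
Qed.

Section Main.
Variables (R : realFieldType) (d : nat) (eta : R) (j : nat)
  (C : {set 'I_(2^j)}) (Ccol : 'I_d -> {set 'I_(2^j)}) (U : {set 'I_(2^j)}).
Hypotheses (d_gt0 : 0 < d) (eta_gt0 : (0 < eta)%R) (eta_le : (eta <= 1/2)%R)
  (Chom : homogeneous_colouring eta C Ccol) (UC0 : U :&: C = set0)
  (prev : previsible d C U).
Local Notation T := 'I_(2^j).

Definition NS k m := [set x : T | x %/ 2^(j-k) == m].
Lemma dyE (A : {set T}) k m : dyrestr A k m = A :&: NS k m.
Proof. by apply/setP => x; rewrite !inE. Qed.

Definition Ucol (f : T -> 'I_d) i := [set x in U | f x == i].
Definition cC k m i := #|Ccol i :&: NS k m|.
Definition cU f k m i := #|Ucol f i :&: NS k m|.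
Definition cnt f k m i := #|(Ccol i :|: Ucol f i) :&: NS k m|.
Definition nn k m := #|(C :|: U) :&: NS k m|.
Definition homv (v : 'I_d -> nat) (n : nat) : Prop :=
  (d < n /\ forall i i', (eta * (v i)%:R <= (v i')%:R)%R) \/
  (n <= d /\ forall i, v i <= 1).
Definition P f k m := homv (cnt f k m) (nn k m).
Definition Good f k m := forall k' m', k <= k' -> k' <= j ->
   m' %/ 2^(k'-k) = m -> P f k' m'.

Lemma CcolC i : Ccol i \subset C.
Proof. case: Chom => [[_ <-] _]. exact: (bigcup_sup i). Qed.

Lemma Ccol_disj i i' x : x \in Ccol i -> x \in Ccol i' -> i = i'.
Proof.
move=> h1 h2; apply/eqP; apply/negPn/negP => ne.
case: Chom => [[D _] _]. have := D _ _ ne. move/setP/(_ x). by rewrite !inE h1 h2.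
Qed.

Lemma CU_disj i (f : T -> 'I_d) i' : Ccol i :&: Ucol f i' = set0.
Proof.
apply/setP => x; rewrite !inE. apply/negP => /and3P [h1 h2 _].
move/setP: UC0 => /(_ x). by rewrite !inE h2 (subsetP (CcolC i)).
Qed.

Lemma cntE f k m i : cnt f k m i = cC k m i + cU f k m i.
Proof.
rewrite /cnt setIUl cardsU /cC /cU. 
have -> : Ccol i :&: NS k m :&: (Ucol f i :&: NS k m) = set0.
  by rewrite setIACA CU_disj set0I.
by rewrite cards0 subn0.
Qed.

Definition dflt : 'I_d := Ordinal d_gt0.
Definition cc (x : T) : 'I_d := if [pick i | x \in Ccol i] is Some i then i else dflt.

Lemma ccP x : x \in C -> forall i, (x \in Ccol i) = (cc x == i).
Proof.
move=> xC. have [i0 xi0] : exists i, x \in Ccol i.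
  case: Chom => [[_ E] _]. move: xC; rewrite -E => /bigcupP [i _ h]; by exists i.
rewrite /cc; case: pickP => [i' hi'|/(_ i0)]; last by rewrite xi0.
move=> i; apply/idP/eqP => [h|<-//]. exact: Ccol_disj hi' h.
Qed.

Lemma sum_cC k m : \sum_i cC k m i = #|C :&: NS k m|.
Proof.
rewrite -(@sum_part _ _ (C :&: NS k m) cc). apply: eq_bigr => i _. rewrite /cC.
apply: eq_card => x; rewrite !inE.
case xC: (x \in C); last first.
  have -> : (x \in Ccol i) = false by apply/negP => /(subsetP (CcolC i)); rewrite xC.
  by [].
rewrite (ccP xC) andbC. by [].
Qed.

Lemma sum_cU f k m : \sum_i cU f k m i = #|U :&: NS k m|.
Proof.
rewrite -(@sum_part _ _ (U :&: NS k m) f). apply: eq_bigr => i _. rewrite /cU.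
apply: eq_card => x; rewrite !inE -!andbA; congr (_ && _); exact: andbC.
Qed.

Lemma nnE k m : nn k m = #|C :&: NS k m| + #|U :&: NS k m|.
Proof.
rewrite /nn setIUl cardsU.
have -> : C :&: NS k m :&: (U :&: NS k m) = set0 by rewrite setIACA [C :&: U]setIC UC0 set0I.
by rewrite cards0 subn0.
Qed.

Lemma sum_cnt f k m : \sum_i cnt f k m i = nn k m.
Proof.
rewrite nnE -sum_cC -(sum_cU f) -big_split /=. apply: eq_bigr => i _; exact: cntE.
Qed.


Lemma NS_split k m : k < j -> NS k m = NS k.+1 m.*2 :|: NS k.+1 m.*2.+1.
Proof.
move=> kj; apply/setP => x; rewrite !inE -half_eq -divnMA -expnSr.
by have -> : (j - k.+1).+1 = j - k by lia.
Qed.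

Lemma NS_disj k m : NS k.+1 m.*2 :&: NS k.+1 m.*2.+1 = set0.
Proof.
apply/setP => x; rewrite !inE; apply/negP => /andP [/eqP -> /eqP]; lia.
Qed.

Lemma card_split (X : {set T}) k m : k < j ->
  #|X :&: NS k m| = #|X :&: NS k.+1 m.*2| + #|X :&: NS k.+1 m.*2.+1|.
Proof.
move=> kj; rewrite NS_split // setIUr cardsU.
have -> : X :&: NS k.+1 m.*2 :&: (X :&: NS k.+1 m.*2.+1) = set0.
  by rewrite setIACA NS_disj setI0.
by rewrite cards0 subn0.
Qed.

Lemma NS_sub k k' m m' : k <= k' -> k' <= j -> m' %/ 2^(k'-k) = m ->
  NS k' m' \subset NS k m.
Proof.
move=> kk kj <-; apply/subsetP => x; rewrite !inE => /eqP <-.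
by rewrite -divnMA -expnD; have -> : j - k' + (k' - k) = j - k by lia.
Qed.

Lemma child_idx k k' m m' : k < k' -> m' %/ 2^(k'-k) = m ->
  (m' %/ 2^(k'-k.+1) == m.*2) || (m' %/ 2^(k'-k.+1) == m.*2.+1).
Proof.
move=> kk <-; rewrite -half_eq -divnMA -expnSr.
by have -> : (k' - k.+1).+1 = k' - k by lia.
Qed.

Lemma cnt_loc f f' k m i : {in U :&: NS k m, f =1 f'} -> cnt f k m i = cnt f' k m i.
Proof.
move=> h; apply: eq_card => x; rewrite !inE.
case: (boolP (x \in U)) => xU //=.
case: (boolP (x %/ 2^(j-k) == m)) => xN; rewrite ?andbF ?andbT //.
by rewrite h // inE xU inE xN.
Qed.

Lemma homv_ext v v' n : v =1 v' -> homv v n -> homv v' n.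
Proof.
move=> e [[h1 h2]|[h1 h2]]; [left|right]; split => // i; rewrite -?e //.
move=> i'; rewrite -!e //.
Qed.

Lemma Good_loc f f' k m : {in U :&: NS k m, f =1 f'} -> Good f k m -> Good f' k m.
Proof.
move=> h G k' m' kk kj e. have := G k' m' kk kj e. rewrite /P.
have sub := NS_sub kk kj e.
apply: homv_ext => i. apply: cnt_loc => x; rewrite inE => /andP [xU xN].
apply: h; by rewrite inE xU (subsetP sub).
Qed.

Lemma cnt_split f k m i : k < j ->
  cnt f k m i = cnt f k.+1 m.*2 i + cnt f k.+1 m.*2.+1 i.
Proof. move=> kj; exact: card_split. Qed.

Lemma nn_split k m : k < j -> nn k m = nn k.+1 m.*2 + nn k.+1 m.*2.+1.
Proof. move=> kj; exact: card_split. Qed.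

Lemma Good_split f k m : k < j -> P f k m -> Good f k.+1 m.*2 ->
  Good f k.+1 m.*2.+1 -> Good f k m.
Proof.
move=> kj Pk G1 G2 k' m' kk k'j e.
case: (ltngtP k k') kk => // [lt|eq] _; last first.
  by move: e; rewrite -eq subnn expn0 divn1 => ->.
have := child_idx lt e. case/orP => /eqP h; [exact: G1 | exact: G2].
Qed.

Lemma Good_small f k m : nn k m <= d -> (forall i, cnt f k m i <= 1) -> Good f k m.
Proof.
move=> hn hc k' m' kk kj e; right.
have sub := NS_sub kk kj e; split.
  apply: leq_trans hn; apply: subset_leq_card; exact: setIS.
move=> i; apply: leq_trans (hc i); apply: subset_leq_card; exact: setIS.
Qed.

Lemma minseq_le (I : eqType) (r : seq I) (x : nat) (F : I -> nat) i :
  i \in r -> \big[minn/x]_(k <- r) F k <= F i.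
Proof.
elim: r => [//|a r IH]; rewrite inE big_cons.
case/orP => [/eqP ->|/IH h]; first exact: geq_minl.
exact: leq_trans (geq_minr _ _) h.
Qed.

Lemma min_le (v : 'I_d -> nat) (i : 'I_d) : \big[minn/2^j]_(i0 < d) v i0 <= v i.
Proof. apply: minseq_le; exact: mem_index_enum. Qed.

Lemma eta_le1 : (eta <= 1)%R.
Proof. apply: le_trans eta_le _. lra. Qed.

Lemma maxmin_to (v : 'I_d -> nat) :
  (eta * (\max_(i < d) v i)%N%:R <= (\big[minn/2^j]_(i < d) v i)%N%:R)%R ->
  forall i i', (eta * (v i)%:R <= (v i')%:R)%R.
Proof.
move=> h i i'. apply: le_trans (le_trans h _).
  apply: ler_wpM2l; first exact: ltW. by rewrite ler_nat leq_bigmax.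
by rewrite ler_nat min_le.
Qed.

Lemma to_maxmin (v : 'I_d -> nat) : (forall i, v i <= 2^j) ->
  (forall i i', (eta * (v i)%:R <= (v i')%:R)%R) ->
  (eta * (\max_(i < d) v i)%N%:R <= (\big[minn/2^j]_(i < d) v i)%N%:R)%R.
Proof.
move=> vb h. have [i0 ->] := @bigop.eq_bigmax _ v (ltac:(by rewrite card_ord)).
elim/big_ind: _ => //.
- apply: le_trans (_ : ((v i0)%:R <= _)%R); last by rewrite ler_nat.
  rewrite -[X in (_ <= X)%R]mul1r. apply: ler_wpM2r => //. exact: eta_le1.
- move=> x y hx hy. by rewrite /minn; case: ifP.
Qed.

Lemma cardNS_le (X : {set T}) k m : #|X :&: NS k m| <= 2^j.
Proof. by apply: leq_trans (max_card _) _; rewrite card_ord. Qed.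

Lemma CHom k m : k <= j -> m < 2^k ->
  (d < #|C :&: NS k m| /\ forall i i', (eta * (cC k m i)%:R <= (cC k m i')%:R)%R) \/
  (#|C :&: NS k m| <= d /\ forall i, cC k m i <= 1).
Proof.
move=> kj mk. case: Chom => _ /(_ k m kj mk). rewrite /maxcount /mincount.
rewrite !dyE. case=> [[h1 h2]|[h1 h2]]; [left|right]; split => //.
  move=> i i'; have := maxmin_to h2 i i'; by rewrite /cC !dyE.
move=> i; have := h2 i; by rewrite dyE.
Qed.

Definition homp (v : 'I_d -> nat) := forall i i', (eta * (v i)%:R <= (v i')%:R)%R.

Lemma homp_pos (v : 'I_d -> nat) : d < \sum_i v i -> homp v -> forall i, 0 < v i.
Proof.
move=> hs hv i. have [a ha] : exists a, 0 < v a.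
  case: (boolP [exists a, 0 < v a]) => [/existsP //|]. rewrite negb_exists => /forallP h0.
  move: hs; rewrite big1 // => a _; have := h0 a; by rewrite -leqNgt leqn0 => /eqP.
have := hv a i. rewrite -(ltr_nat R) => h. apply: lt_le_trans h.
apply: mulr_gt0 => //; by rewrite ltr0n.
Qed.

Lemma sum01_lt (v : 'I_d -> nat) z : (forall i, v i <= 1) -> v z = 0 -> \sum_i v i < d.
Proof.
move=> h1 hz. rewrite (bigD1 z) //= hz add0n.
apply: (@leq_ltn_trans (\sum_(i < d | i != z) 1)).
  exact: leq_sum.
rewrite sum1_card cardC1 card_ord. by case: d d_gt0.
Qed.

Lemma sum01_card (v : 'I_d -> nat) : (forall i, v i <= 1) ->
  \sum_i v i = #|[set i | v i == 1]|.
Proof.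
move=> h; rewrite -sum1_card [RHS]big_mkcond /=. apply: eq_bigr => i _.
rewrite inE; have := h i; by case: (v i) => [|[|]].
Qed.

Lemma L1 (x y : 'I_d -> nat) : homp x -> homp y -> homp (fun i => x i + y i).
Proof.
move=> hx hy i i' /=; rewrite !natrD mulrDr; exact: lerD.
Qed.

Lemma L2 (y : 'I_d -> nat) : homp y -> homp (fun i => 1 + y i).
Proof.
move=> hy i i' /=; rewrite !natrD mulrDr; apply: lerD; last exact: hy.
rewrite mulr1; exact: eta_le1.
Qed.

Lemma key_ineq (a b : nat) : a <= b -> 0 < b -> (eta * (a.+1)%:R <= b%:R)%R.
Proof.
move=> ab b0. have h1 : (a.+1%:R <= b.+1%:R :> R)%R by rewrite ler_nat.
have h2 : (1 <= b%:R :> R)%R by rewrite ler1n.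
have h3 : (eta * a.+1%:R <= 1/2 * a.+1%:R :> R)%R by apply: ler_wpM2r.
rewrite -addn1 natrD in h1 h3 *. rewrite -addn1 natrD in h1. lra.
Qed.

Lemma L3 (cA s y : 'I_d -> nat) :
  (forall i, cA i <= 1) -> (forall i, s i <= 1) ->
  (forall i, s i = 1 -> cA i = 0) ->
  (forall i i', s i = 1 -> cA i' = 0 -> s i' = 0 -> y i <= y i') ->
  homp (fun i => cA i + y i) -> homp y -> (forall i, 0 < y i) ->
  homp (fun i => cA i + s i + y i).
Proof.
move=> hc hs hsc hg hcy hy ypos i i' /=.
case: (leqP (s i) 0) => si.
  have -> : s i = 0 by lia.
  rewrite addn0; apply: le_trans (hcy i i') _. by rewrite /= ler_nat; lia.
have si1 : s i = 1 by have := hs i; lia.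
rewrite si1 (hsc i si1) add0n add1n.
case: (leqP (cA i' + s i') 0) => h'.
  have c0 : cA i' = 0 by lia. have s0 : s i' = 0 by lia.
  rewrite c0 s0 add0n; apply: key_ineq; [exact: hg | exact: ypos].
apply: le_trans (_ : ((y i').+1%:R <= _)%R); last by rewrite ler_nat; lia.
rewrite -[(y i).+1]addn1 -[(y i').+1]addn1 !natrD mulrDr mulr1; apply: lerD; [exact: hy | exact: eta_le1].
Qed.

Lemma L5 (h : 'I_d -> nat) : (forall i, 0 < h i <= 2) -> homp h.
Proof.
move=> hh i i'. have /andP [_ h2] := hh i. have /andP [h1 _] := hh i'.
apply: le_trans (_ : (1 <= _)%R); last by rewrite ler1n.
apply: le_trans (_ : eta * 2%:R <= _)%R.
  apply: ler_wpM2l; [exact: ltW | by rewrite ler_nat].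
rewrite -[2]/(1+1)%N natrD mulrDr mulr1. apply: le_trans (lerD eta_le eta_le) _. rewrite -splitr. by [].
Qed.

Lemma greedy (w : 'I_d -> nat) (F : {set 'I_d}) k : k <= #|~: F| ->
  exists S : {set 'I_d}, [/\ S \subset ~: F, #|S| = k &
    forall i i', i \in S -> i' \notin F -> i' \notin S -> w i <= w i'].
Proof.
elim: k => [|k IH] hk.
  exists set0; split; rewrite ?sub0set ?cards0 // => i i'; by rewrite inE.
have [S [SF cS g]] := IH (ltnW hk).
have : 0 < #|~: F :\: S|.
  rewrite cardsD. have : #|~: F :&: S| <= #|S| by apply: subset_leq_card; exact: subsetIr.
  lia.
rewrite card_gt0 => /set0Pn [i0 hi0].
case: (arg_minnP w hi0) => a ha0 amin.
have ha : a \in ~: F :\: S := ha0.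
exists (a |: S); split.
- rewrite subUset sub1set SF andbT. move: ha; rewrite inE; by case/andP.
- rewrite cardsU1 cS. move: ha; rewrite inE; by case/andP => ->.
- move=> i i' hi i'F hi'.
  have i'S : i' \notin S by apply: contra hi' => h; exact: setU1r.
  have i'a : i' != a by apply: contra hi' => /eqP ->; exact: setU11.
  move: hi; rewrite in_setU1 => /orP [/eqP ->|iS]; last exact: g.
  have h' : i' \in ~: F :\: S by rewrite !inE i'S i'F. exact: amin h'.
Qed.

Lemma perm_sets (A B : {set 'I_d}) : #|A| = #|B| ->
  exists s : {perm 'I_d}, forall i, (s i \in B) = (i \in A).
Proof.
move=> cAB.
pose sA := enum A ++ enum (~: A). pose sB := enum B ++ enum (~: B).
have memA : forall i, i \in sA by move=> i; rewrite mem_cat !mem_enum inE; case: (i \in A).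
have szA : size sA = d by rewrite size_cat -!cardE cardsC card_ord.
have szB : size sB = d by rewrite size_cat -!cardE cardsC card_ord.
have uB : uniq sB.
  rewrite cat_uniq !enum_uniq /= andbT; apply/hasPn => x; rewrite !mem_enum inE; by case: (x \in B).
pose g i := nth i sB (index i sA).
have ltA : forall i, index i sA < d by move=> i; rewrite -[X in _ < X]szA index_mem.
have ginj : injective g.
  move=> i i'; rewrite /g => e.
  have h := @nth_uniq _ i sB (index i sA) (index i' sA).
  rewrite szB !ltA in h. have {h} h := h isT isT uB.
  rewrite e (set_nth_default i' i) ?szB ?ltA // eqxx in h.
  move/esym/eqP: h.
  move=> e2; by rewrite -(nth_index i (memA i)) e2 nth_index.
exists (perm ginj) => i; rewrite permE /g /sB nth_cat -cardE /sA index_cat mem_enum.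
case iA: (i \in A).
  have lt : index i (enum A) < #|B| by rewrite -cAB cardE index_mem mem_enum.
  by rewrite lt -(mem_enum B); apply: mem_nth; rewrite -cardE.
rewrite -cardE -cAB ltnNge leq_addr /=.
have : nth i (enum (~: B)) (#|A| + index i (enum (~: A)) - #|A|) \in enum (~: B).
  apply: mem_nth; rewrite -cardE addKn.
  have : #|B| + #|~: B| = d by rewrite cardsC card_ord.
  have := ltA i; rewrite /sA index_cat mem_enum iA -cardE. lia.
by rewrite mem_enum inE => /negbTE.
Qed.

Lemma inj_into (X : {set T}) (S : {set 'I_d}) : #|X| = #|S| ->
  exists f : T -> 'I_d, {in X &, injective f} /\ f @: X = S.
Proof.
move=> cXS. pose f x := nth dflt (enum S) (index x (enum X)).
have ltX : forall x, x \in X -> index x (enum X) < size (enum S).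
  by move=> x xX; rewrite -cardE -cXS cardE index_mem mem_enum.
have finj : {in X &, injective f}.
  move=> x y xX yX; rewrite /f => /eqP; rewrite nth_uniq ?enum_uniq ?ltX // => /eqP e.
  by rewrite -(nth_index x (_ : x \in enum X)) ?mem_enum // e nth_index ?mem_enum.
exists f; split => //.
apply/eqP; rewrite eqEcard card_in_imset // cXS leqnn andbT.
apply/subsetP => _ /imsetP [x xX ->]. rewrite -mem_enum; apply: mem_nth; exact: ltX.
Qed.

Lemma cU_inj f k m S : {in U :&: NS k m &, injective f} -> f @: (U :&: NS k m) = S ->
  forall i, cU f k m i = (i \in S).
Proof.
move=> finj fim i. rewrite /cU.
have -> : Ucol f i :&: NS k m = [set x in U :&: NS k m | f x == i].
  apply/setP => x; rewrite !inE -!andbA; congr (_ && _); exact: andbC.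
case: (boolP (i \in S)) => hi.
  move: hi; rewrite -fim => /imsetP [x0 x0X ->].
  have -> : [set x in U :&: NS k m | f x == f x0] = [set x0].
    apply/setP => x; rewrite in_set in_set1; apply/andP/eqP => [[xX /eqP e]|->].
      exact: finj e.
    by split.
  by rewrite cards1.
rewrite (_ : [set x in _ | _] = set0) ?cards0 //.
apply/setP => x; rewrite in_set in_set0; apply/negP => /andP [xX /eqP e].
move: hi; rewrite -fim -e; apply/negP/negPn. exact: imset_f.
Qed.

Lemma Csmall k m : k <= j -> m < 2^k -> nn k m <= d -> forall i, cC k m i <= 1.
Proof.
move=> kj mk hn. case: (CHom kj mk) => [[h _]|[_ //]].
exfalso; move: hn; rewrite nnE; lia.
Qed.

Lemma SmallCol k m (w : 'I_d -> nat) : k <= j -> m < 2^k -> nn k m <= d ->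
  exists (f : T -> 'I_d) (S : {set 'I_d}), [/\ S \subset ~: [set i | 0 < cC k m i],
    (forall i, cU f k m i = (i \in S)),
    (forall i i', i \in S -> cC k m i' = 0 -> i' \notin S -> w i <= w i') &
    Good f k m].
Proof.
move=> kj mk hn. have c1 := Csmall kj mk hn.
set F := [set i | 0 < cC k m i].
have cF : #|F| = #|C :&: NS k m|.
  rewrite -sum_cC sum01_card //. apply: eq_card => i; rewrite !inE.
  have := c1 i; by case: (cC k m i) => [|[|]].
have hk : #|U :&: NS k m| <= #|~: F|.
  have := cardsC F; rewrite card_ord cF. move: hn; rewrite nnE. lia.
have [S [SF cS g]] := greedy w hk.
have [f [finj fim]] := inj_into (esym cS).
have cUe := cU_inj finj fim.
exists f, S; split => //.
- move=> i i' iS c0 i'S; apply: g => //; by rewrite inE c0.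
- apply: Good_small => // i. rewrite cntE cUe.
  case: (boolP (i \in S)) => iS; last by rewrite addn0.
  have := subsetP SF i iS; rewrite !inE -leqNgt leqn0 => /eqP ->. by [].
Qed.

Lemma Good_perm f (s : {perm 'I_d}) k m : C :&: NS k m = set0 -> Good f k m ->
  Good (fun x => (s^-1)%g (f x)) k m /\
  forall i, cnt (fun x => (s^-1)%g (f x)) k m i = cnt f k m (s i).
Proof.
move=> C0 G.
have key : forall k' m', NS k' m' \subset NS k m ->
    forall i, cnt (fun x => (s^-1)%g (f x)) k' m' i = cnt f k' m' (s i).
  move=> k' m' sub i; rewrite !cntE.
  have z : forall i0, cC k' m' i0 = 0.
    move=> i0; have : Ccol i0 :&: NS k' m' \subset C :&: NS k m by apply: setISS (CcolC _) sub.
    rewrite C0 subset0 => /eqP h; by rewrite /cC h cards0.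
  rewrite !z !add0n /cU. apply: eq_card => x; rewrite !inE.
  have -> : ((s^-1)%g (f x) == i) = (f x == s i).
    by rewrite -(inj_eq (@perm_inj _ s)) permKV.
  by [].
split; last by apply: key.
move=> k' m' kk kj e. have sub := NS_sub kk kj e.
have := G k' m' kk kj e. rewrite /P => [[[h1 h2]|[h1 h2]]]; [left|right]; split => //.
  move=> i i'; rewrite !key //.
move=> i; by rewrite key.
Qed.

Definition ordab m a b := (a = m.*2 /\ b = m.*2.+1) \/ (a = m.*2.+1 /\ b = m.*2).

Lemma card_split_ab (X : {set T}) k m a b : k < j -> ordab m a b ->
  #|X :&: NS k m| = #|X :&: NS k.+1 a| + #|X :&: NS k.+1 b|.
Proof. move=> kj [[-> ->]|[-> ->]]; rewrite card_split //; exact: addnC. Qed.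

Lemma NS_ab k m a b x : ordab m a b -> x \in NS k.+1 b -> x \notin NS k.+1 a.
Proof. move=> [[-> ->]|[-> ->]]; rewrite !inE => /eqP ->; lia. Qed.

Lemma ab_lt k m a b : m < 2^k -> ordab m a b -> a < 2^k.+1 /\ b < 2^k.+1.
Proof. rewrite expnS => mk [[-> ->]|[-> ->]]; split; lia. Qed.

Lemma Good_self f k m : k <= j -> Good f k m -> P f k m.
Proof. move=> kj G; apply: G => //; by rewrite subnn expn0 divn1. Qed.

Lemma Good_self_big f k m : k <= j -> Good f k m -> d < nn k m -> homp (cnt f k m).
Proof. move=> kj /(Good_self kj) [[_ //]|[h _]] hn; exfalso; lia. Qed.

Lemma Good_self_small f k m : k <= j -> Good f k m -> nn k m <= d -> forall i, cnt f k m i <= 1.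
Proof. move=> kj /(Good_self kj) [[h _]|[_ //]] hn; exfalso; lia. Qed.

Lemma homp_ext (v v' : 'I_d -> nat) : v =1 v' -> homp v -> homp v'.
Proof. move=> e h i i'; rewrite -!e; exact: h. Qed.

Lemma glue k m a b fa fb : k < j -> ordab m a b ->
  Good fa k.+1 a -> Good fb k.+1 b ->
  homv (fun i => cnt fa k.+1 a i + cnt fb k.+1 b i) (nn k m) ->
  exists f, Good f k m.
Proof.
move=> kj o Ga Gb hv.
pose f x := if x \in NS k.+1 a then fa x else fb x.
have ea : {in U :&: NS k.+1 a, fa =1 f}.
  by move=> x; rewrite inE => /andP [_ xa]; rewrite /f xa.
have eb : {in U :&: NS k.+1 b, fb =1 f}.
  move=> x; rewrite inE => /andP [_ xb]; by rewrite /f (negbTE (NS_ab o xb)).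
have Ga' := Good_loc ea Ga. have Gb' := Good_loc eb Gb.
exists f.
have Pk : P f k m.
  apply: homv_ext hv => i /=. rewrite (cnt_loc _ ea) (cnt_loc _ eb).
  by rewrite [RHS]/cnt (card_split_ab _ kj o).
case: o Ga' Gb' => [[-> ->]|[-> ->]] G1 G2; exact: Good_split.
Qed.

Lemma nn_ab k m a b : k < j -> ordab m a b -> nn k m = nn k.+1 a + nn k.+1 b.
Proof. move=> kj o; exact: card_split_ab. Qed.

Lemma cC_ab k m a b i : k < j -> ordab m a b -> cC k m i = cC k.+1 a i + cC k.+1 b i.
Proof. move=> kj o; exact: card_split_ab. Qed.

Lemma caseBB k m a b : k < j -> m < 2^k -> ordab m a b ->
  (forall m', m' < 2^k.+1 -> exists f, Good f k.+1 m') ->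
  d < nn k.+1 a -> d < nn k.+1 b -> exists f, Good f k m.
Proof.
move=> kj mk o IH ha hb. have [la lb] := ab_lt mk o.
have [fa Ga] := IH _ la. have [fb Gb] := IH _ lb.
apply: (glue kj o Ga Gb); left; split.
  rewrite (nn_ab kj o); lia.
apply: L1; exact: Good_self_big.
Qed.

Lemma caseSS k m : k < j -> m < 2^k ->
  nn k.+1 m.*2 <= d -> nn k.+1 m.*2.+1 <= d -> d < nn k m -> exists f, Good f k m.
Proof.
move=> kj mk ha hb hn.
have o : ordab m m.*2 m.*2.+1 by left.
have [la lb] := ab_lt mk o.
have kj' : k.+1 <= j by [].
have [fb [SB [SBF cUB gB GB]]] := SmallCol (cC k.+1 m.*2) kj' lb hb.
have [fa [SA [SAF cUA gA GA]]] := SmallCol (cnt fb k.+1 m.*2.+1) kj' la ha.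
apply: (glue kj o GA GB); left; split => //.
apply: L5 => i; apply/andP; split; last first.
  have := Good_self_small kj' GA ha i; have := Good_self_small kj' GB hb i. lia.
rewrite lt0n; apply/negP => /eqP hz.
have cAz : cC k.+1 m.*2 i = 0 by move: hz; rewrite cntE; lia.
have zA : i \notin SA by move: hz; rewrite cntE cUA; case: (i \in SA) => //; lia.
have cBz : cnt fb k.+1 m.*2.+1 i = 0 by lia.
have cBz' : cC k.+1 m.*2.+1 i = 0 by move: cBz; rewrite cntE; lia.
have zB : i \notin SB by move: cBz; rewrite cntE cUB; case: (i \in SB) => //; lia.
have gA' : forall i0, i0 \in SA -> cnt fb k.+1 m.*2.+1 i0 = 0.
  move=> i0 h0; have := gA i0 i h0 cAz zA; lia.
have gB' : forall i0, i0 \in SB -> cC k.+1 m.*2 i0 = 0.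
  move=> i0 h0; have := gB i0 i h0 cBz' zB; lia.
have cNz : cC k m i = 0 by rewrite (cC_ab _ kj o) cAz cBz'.
case: (CHom (ltnW kj) mk) => [[h1 h2]|[h1 h2]].
  have : 0 < cC k m i by apply: (@homp_pos (cC k m)) => //; rewrite sum_cC.
  by rewrite cNz.
have hle : forall i0, cnt fa k.+1 m.*2 i0 + cnt fb k.+1 m.*2.+1 i0 <= 1.
  move=> i0. have := h2 i0; rewrite (cC_ab _ kj o) => hc.
  case: (boolP (i0 \in SA)) => iA.
    have h0 := gA' _ iA. have := subsetP SAF _ iA; rewrite !inE -leqNgt leqn0 => /eqP c0.
    by rewrite h0 addn0 cntE cUA iA c0.
  case: (boolP (i0 \in SB)) => iB.
    have := subsetP SBF _ iB; rewrite !inE -leqNgt leqn0 => /eqP c0.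
    rewrite !cntE cUA cUB (negbTE iA) iB c0 (gB' _ iB). by [].
  rewrite !cntE cUA cUB (negbTE iA) (negbTE iB); lia.
have := sum01_lt hle (_ : _ = 0); move=> /(_ i). rewrite hz => /(_ erefl).
rewrite big_split /= !sum_cnt -(nn_ab kj o). lia.
Qed.

Lemma cU_empty f k m : U :&: NS k m = set0 -> forall i, cU f k m i = 0.
Proof.
move=> h i; apply/eqP; rewrite cards_eq0 -subset0 -h.
apply: setSI; apply/subsetP => x; rewrite inE; by case/andP.
Qed.

Lemma caseSB k m a b : k < j -> m < 2^k -> ordab m a b ->
  (forall m', m' < 2^k.+1 -> exists f, Good f k.+1 m') ->
  nn k.+1 a <= d -> d < nn k.+1 b -> exists f, Good f k m.
Proof.
move=> kj mk o IH ha hb. have [la lb] := ab_lt mk o.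
have kj' : k.+1 <= j by [].
have hN : d < nn k m by rewrite (nn_ab kj o); lia.
case: (ltngtP (nn k.+1 a) d) => [lt||eq]; last 2 first.
- by move=> h; exfalso; lia.
- have [fa [S [_ _ _ GA]]] := SmallCol (fun _ => 0) kj' la ha.
  have [fb GB] := IH _ lb.
  apply: (glue kj o GA GB); left; split => //.
  have x1 : forall i, cnt fa k.+1 a i = 1.
    move=> i. have hx := Good_self_small kj' GA ha.
    have := hx i; case: (leqP (cnt fa k.+1 a i) 0) => [h0|]; last by lia.
    have := sum01_lt hx (_ : cnt fa k.+1 a i = 0); rewrite sum_cnt eq; lia.
  apply: (homp_ext (v := fun i => 1 + cnt fb k.+1 b i)) => [i|]; first by rewrite x1.
  apply: L2; exact: Good_self_big.
have hp := prev kj mk o.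
rewrite !dyE [U :|: C]setUC -/(nn _ _) -/(nn _ _) in hp.
case: (hp lt (ltnW hb)) => [U0|C0].
- have [fb GB] := IH _ lb.
  have cUb := cU_empty fb U0.
  have [fa [S [SF cUA g GA]]] := SmallCol (cC k.+1 b) kj' la ha.
  apply: (glue kj o GA GB); left; split => //.
  have nb : nn k.+1 b = #|C :&: NS k.+1 b|.
    rewrite nnE (_ : #|U :&: NS k.+1 b| = 0) ?addn0 //; by rewrite U0 cards0.
  have cb : forall i, cnt fb k.+1 b i = cC k.+1 b i by move=> i; rewrite cntE cUb addn0.
  apply: (homp_ext (v := fun i => cC k.+1 a i + (i \in S) + cC k.+1 b i)).
    by move=> i /=; rewrite cntE cUA cb.
  apply: L3.
  + exact: Csmall.
  + by move=> i; case: (i \in S).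
  + move=> i; case iS: (i \in S) => // _.
    by have := subsetP SF i iS; rewrite !inE -leqNgt leqn0 => /eqP.
  + move=> i i'; case iS: (i \in S) => // _ c0; case i'S: (i' \in S) => // _.
    apply: g => //; by rewrite i'S.
  + apply: (homp_ext (v := cC k m)); first by move=> i; rewrite (cC_ab _ kj o).
    case: (CHom (ltnW kj) mk) => [[_ //]|[h _]]; exfalso.
    move: h; rewrite (card_split_ab _ kj o) -nb; lia.
  + apply: (homp_ext (v := cnt fb k.+1 b)) => //. exact: Good_self_big.
  + apply: homp_pos; first by rewrite sum_cC -nb.
    apply: (homp_ext (v := cnt fb k.+1 b)) => //. exact: Good_self_big.
- have [fa [S0 [_ _ _ GA]]] := SmallCol (fun _ => 0) kj' la ha.
  have [fb GB] := IH _ lb.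
  have x1 := Good_self_small kj' GA ha.
  have yh := Good_self_big kj' GB hb.
  pose X := [set i | cnt fa k.+1 a i == 1].
  have hk : #|X| <= #|~: (set0 : {set 'I_d})| by rewrite setC0 cardsT max_card.
  have [S [_ cS gS]] := greedy (cnt fb k.+1 b) hk.
  have [s hs] := perm_sets (esym cS).
  have [GB' ec] := Good_perm s C0 GB.
  apply: (glue kj o GA GB'); left; split => //.
  apply: (homp_ext (v := fun i => 0 + cnt fa k.+1 a i + cnt fb k.+1 b (s i))).
    by move=> i /=; rewrite ec.
  have ypos : forall i, 0 < cnt fb k.+1 b i by apply: homp_pos => //; rewrite sum_cnt.
  apply: L3 => //.
  + move=> i i' xi _ xi'. apply: gS; first by rewrite hs inE xi.
      by rewrite inE.
    by rewrite hs inE xi'.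
  + move=> i i' /=; exact: yh.
Qed.

Lemma small_node k m : k <= j -> m < 2^k -> nn k m <= d -> exists f, Good f k m.
Proof.
move=> kj mk hn. have [f [S [_ _ _ G]]] := SmallCol (fun _ => 0) kj mk hn. by exists f.
Qed.

Lemma main_ind t : forall k m, k + t = j -> m < 2^k -> exists f, Good f k m.
Proof.
elim: t => [|t IH] k m e mk.
  rewrite addn0 in e.
  have h1 : nn k m <= 1.
    rewrite /nn. apply: leq_trans (subset_leq_card (subsetIr _ _)) _.
    apply/card_le1_eqP => x y; rewrite !inE e subnn expn0 !divn1 => /eqP hx /eqP hy.
    apply: val_inj; by rewrite /= hx hy.
  apply: small_node => //; [by rewrite e | lia].
have kj : k < j by lia.
have IHc : forall m', m' < 2^k.+1 -> exists f, Good f k.+1 m'.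
  move=> m' h; apply: IH => //; lia.
case: (leqP (nn k m) d) => hn; first by apply: small_node => //; exact: ltnW.
have o : ordab m m.*2 m.*2.+1 by left.
have o' : ordab m m.*2.+1 m.*2 by right.
case: (leqP (nn k.+1 m.*2) d) => ha; case: (leqP (nn k.+1 m.*2.+1) d) => hb.
- exact: caseSS.
- exact: (caseSB kj mk o IHc).
- exact: (caseSB kj mk o' IHc).
- exact: (caseBB kj mk o IHc).
Qed.

Lemma final : exists Ucol : 'I_d -> {set T},
    colouring U Ucol /\
    homogeneous_colouring eta (C :|: U) (fun i => Ccol i :|: Ucol i).
Proof.
have [f G] := main_ind (k:=0) (m:=0) (erefl j) (ltn0Sn 0).
have Cc := Chom.1.
exists (Ucol f).
have UD : forall i i', i != i' -> Ucol f i :&: Ucol f i' = set0.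
  move=> i i' ne; apply/setP => x; rewrite !inE; apply/negP => /andP [/andP [_ /eqP h1] /andP [_ /eqP h2]].
  by move: ne; rewrite -h1 -h2 eqxx.
have UU : \bigcup_(i < d) Ucol f i = U.
  apply/setP => x; apply/bigcupP/idP => [[i _]|xU]; first by rewrite inE => /andP [].
  exists (f x) => //; by rewrite inE xU eqxx.
split; first by split.
split.
  split.
    move=> i i' ne /=. rewrite setIUl !setIUr (CU_disj i f i') (UD _ _ ne) [Ucol f i :&: Ccol i']setIC (CU_disj i' f i).
    by case: Cc => [D _]; rewrite (D _ _ ne) !set0U.
  by rewrite big_split /= UU; case: Cc => [_ ->].
move=> k m kj mk.
have Pk : P f k m by apply: G => //; rewrite subn0 divn_small.
rewrite /maxcount /mincount.
case: Pk => [[h1 h2]|[h1 h2]]; [left|right]; split.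
- by rewrite dyE.
- apply: to_maxmin => [i|i i']; rewrite !dyE; [exact: cardNS_le | exact: h2].
- by rewrite dyE.
- move=> i; rewrite dyE; exact: h2.
Qed.

End Main.

Local Open Scope ring_scope.

Theorem theorem2p1 (R : realFieldType) (d : nat) (eta : R) (j : nat)
    (C : {set 'I_(2^j)}) (Ccol : 'I_d -> {set 'I_(2^j)})
    (U : {set 'I_(2^j)}) :
  (0 < d)%N -> 0 < eta -> eta <= 1 / 2 ->
  homogeneous_colouring eta C Ccol ->
  U :&: C = set0 ->
  previsible d C U ->
  exists Ucol : 'I_d -> {set 'I_(2^j)},
    colouring U Ucol /\
    homogeneous_colouring eta (C :|: U) (fun i => Ccol i :|: Ucol i).
Proof. move=> *; exact: final. Qed.
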